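(* For each $\alpha \in (0,1)$ the map $T_\alpha$ is an AFN-map.
   Context: For $\alpha \in (0,1)$ let $D_\alpha = \bigcup_{n \ge 1} \big[ \frac{1}{n+\alpha}, \frac1n \big]$, $D_\alpha^{\mathsf c} = [0,1]\setminus D_\alpha$, $I_\alpha = [\min\{\alpha,1-\alpha\},1]$, and $T_\alpha : I_\alpha \to I_\alpha$, $T_\alpha(x) = \frac1x - \lfloor \frac1x \rfloor$ if $x \in D_\alpha^{\mathsf c}$, $T_\alpha(x) = 1 + \lfloor \frac1x \rfloor - \frac1x$ if $x \in D_\alpha$. Let $X$ be a finite union of bounded intervals. A map $T:X\to X$ is an AFN-map if there is a finite partition $\mathcal P$ of $X$ (up to finitely many points) into non-empty open intervals $I_i$ such that each restriction $T|_{I_i}$ is continuous, strictly monotone and twice differentiable, and: (A) (Adler's condition) $T''/(T')^2$ is bounded on $\bigcup_i I_i$; (F) (finite image condition) the collection $\{T(I_i): I_i\in\mathcal P\}$ is finite; (N) there is a finite set $\mathcal Z\subseteq\mathcal P$ such that each $Z\in\mathcal Z$ has an indifferent fixed point $x_Z$ (an endpoint of $Z$), i.e. $\lim_{x\to x_Z, x\in Z}T(x)=x_Z$ and $\lim_{x\to x_Z,x\in Z}T'(x)=1$, with $T'$ decreasing on $(-\infty,x_Z)\cap Z$ and increasing on $(x_Z,\infty)\cap Z$, and $T$ is uniformly expanding on sets bounded away from $\{x_Z : Z\in\mathcal Z\}$. *)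

(* Defs.v *)
From Stdlib Require Import Reals Lra List ClassicalEpsilon.
From Coquelicot Require Import Coquelicot.
Open Scope R_scope.

(* A bounded interval (endpoints open or closed, possibly degenerate). *)
Definition bounded_interval (S : R -> Prop) : Prop :=
  exists a b : R, a <= b /\
    (forall x, a < x < b -> S x) /\ (forall x, S x -> a <= x <= b).

Definition finite_union_bounded_intervals (X : R -> Prop) : Prop :=
  exists L : list (R -> Prop),
    (forall S, In S L -> bounded_interval S) /\
    (forall x, X x <-> exists S, In S L /\ S x).

Definition oint (I : R * R) (x : R) : Prop := fst I < x < snd I.

Definition partition_mod_finite (X : R -> Prop) (P : list (R * R)) : Prop :=
  (forall I, In I P -> fst I < snd I) /\
  (forall I, In I P -> forall x, oint I x -> X x) /\
  NoDup P /\
  (forall I J, In I P -> In J P -> I <> J -> forall x, oint I x -> ~ oint J x) /\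
  (exists F : list R, forall x, X x -> (exists I, In I P /\ oint I x) \/ In x F).

Definition good_branch (T : R -> R) (I : R * R) : Prop :=
  (forall x, oint I x -> continuous T x) /\
  ((forall x y, oint I x -> oint I y -> x < y -> T x < T y) \/
   (forall x y, oint I x -> oint I y -> x < y -> T y < T x)) /\
  (forall x, oint I x -> ex_derive T x) /\
  (forall x, oint I x -> ex_derive (Derive T) x).

Definition indifferent_branch (T : R -> R) (Z : R * R) (xZ : R) : Prop :=
  (xZ = fst Z \/ xZ = snd Z) /\
  filterlim T (within (oint Z) (locally xZ)) (locally xZ) /\
  filterlim (Derive T) (within (oint Z) (locally xZ)) (locally 1) /\
  (forall x y, oint Z x -> oint Z y -> x < y -> y < xZ ->
      Derive T y <= Derive T x) /\
  (forall x y, oint Z x -> oint Z y -> xZ < x -> x < y ->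
      Derive T x <= Derive T y).

Definition AFN_map (X : R -> Prop) (T : R -> R) : Prop :=
  finite_union_bounded_intervals X /\
  (forall x, X x -> X (T x)) /\
  exists P : list (R * R),
    partition_mod_finite X P /\
    (forall I, In I P -> good_branch T I) /\
    (* (A) Adler's condition *)
    (exists M : R, forall I, In I P -> forall x, oint I x ->
        Derive T x <> 0 /\
        Rabs (Derive (Derive T) x / (Derive T x) ^ 2) <= M) /\
    (* (F) finite image condition *)
    (exists L : list (R -> Prop), forall I, In I P ->
        exists S, In S L /\ forall y, S y <-> exists x, oint I x /\ T x = y) /\
    (exists Zs : list ((R * R) * R),
        (forall Z, In Z Zs -> In (fst Z) P /\ indifferent_branch T (fst Z) (snd Z)) /\
        (forall eps, eps > 0 -> exists rho, rho > 1 /\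
           forall I x, In I P -> oint I x ->
             (forall Z, In Z Zs -> Rabs (x - snd Z) >= eps) ->
             Rabs (Derive T x) >= rho)).

Definition flr (x : R) : R := IZR (Int_part x).

Definition D_alpha (alpha x : R) : Prop :=
  exists n : nat, (1 <= n)%nat /\ / (INR n + alpha) <= x <= / INR n.

Definition I_alpha (alpha x : R) : Prop := Rmin alpha (1 - alpha) <= x <= 1.

Definition T_alpha (alpha x : R) : R :=
  if excluded_middle_informative (D_alpha alpha x)
  then 1 + flr (/ x) - / x
  else / x - flr (/ x).

(* Main.v *)
Require Import Defs.
From Stdlib Require Import Reals Lra Lia List Classical ClassicalEpsilon.
From Coquelicot Require Import Coquelicot.
Open Scope R_scope.

Definition gg (n : nat) (b : bool) (t : R) : R :=
  if b then 1 + INR n - / t else / t - INR n.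
Definition d1 (b : bool) (t : R) : R := if b then / t ^ 2 else - / t ^ 2.
Definition d2 (b : bool) (t : R) : R := if b then - 2 / t ^ 3 else 2 / t ^ 3.

Lemma gg_d1 n b x : x <> 0 -> is_derive (gg n b) x (d1 b x).
Proof. intros Hx; destruct b; unfold gg, d1; auto_derive; auto; field; auto. Qed.

Lemma d1_d2 b x : x <> 0 -> is_derive (d1 b) x (d2 b x).
Proof. intros Hx; destruct b; unfold d2, d1; auto_derive; auto; field; auto. Qed.

Lemma branch_local (T : R -> R) lo hi n b :
  0 < lo -> (forall t, lo < t < hi -> T t = gg n b t) ->
  forall x, lo < x < hi ->
  continuous T x /\ ex_derive T x /\ Derive T x = d1 b x /\
  ex_derive (Derive T) x /\ Derive (Derive T) x = d2 b x.
Proof.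
  intros Hlo HT.
  assert (Hloc : forall x, lo < x < hi -> locally x (fun t => gg n b t = T t)).
  { intros x Hx. apply (locally_interval _ x lo hi); simpl; try lra.
    intros y H1 H2. symmetry; apply HT; lra. }
  assert (Hd : forall x, lo < x < hi -> ex_derive T x /\ Derive T x = d1 b x).
  { intros x Hx. split.
    - apply (ex_derive_ext_loc (gg n b)). apply Hloc; auto.
      eexists; apply gg_d1; lra.
    - rewrite <- (Derive_ext_loc (gg n b)). apply is_derive_unique, gg_d1; lra.
      apply Hloc; auto. }
  intros x Hx. destruct (Hd x Hx) as [Hd1 Hd2].
  assert (Hloc2 : locally x (fun t => d1 b t = Derive T t)).
  { apply (locally_interval _ x lo hi); simpl; try lra.
    intros y H1 H2. symmetry; apply Hd; lra. }
  refine (conj _ (conj Hd1 (conj Hd2 (conj _ _)))).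
  - apply (ex_derive_continuous (K:=R_AbsRing) (V:=R_NormedModule)); auto.
  - apply (ex_derive_ext_loc (d1 b)); auto. eexists; apply d1_d2; lra.
  - rewrite <- (Derive_ext_loc (d1 b)). apply is_derive_unique, d1_d2; lra.
    apply Hloc2.
Qed.

Definition ee (a : R) (j : nat) : R :=
  / (INR (Nat.div2 j) + 1 + (if Nat.even j then 0 else a)).

Lemma div2_even k : Nat.div2 (2*k) = k /\ Nat.even (2*k) = true /\
   Nat.div2 (S (2*k)) = k /\ Nat.even (S (2*k)) = false.
Proof.
  induction k as [|k IH]; [simpl; auto|].
  replace (2 * S k)%nat with (S (S (2*k))) by lia.
  destruct IH as [H1 [H2 [H3 H4]]].
  change (Nat.div2 (S (S (2*k)))) with (S (Nat.div2 (2*k))).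
  change (Nat.even (S (S (2*k)))) with (Nat.even (2*k)).
  change (Nat.div2 (S (S (S (2*k))))) with (S (Nat.div2 (S (2*k)))).
  change (Nat.even (S (S (S (2*k))))) with (Nat.even (S (2*k))).
  rewrite H1, H2, H3, H4. auto.
Qed.

Lemma ee_even a k : ee a (2*k) = / (INR k + 1).
Proof. unfold ee. destruct (div2_even k) as [H1 [H2 _]]. rewrite H1, H2. f_equal; ring. Qed.

Lemma ee_odd a k : ee a (S (2*k)) = / (INR k + 1 + a).
Proof. unfold ee. destruct (div2_even k) as [_ [_ [H1 H2]]]. rewrite H1, H2. auto. Qed.

Lemma parity j : (exists k, j = 2*k)%nat \/ (exists k, j = S (2*k))%nat.
Proof.
  destruct (Nat.Even_or_Odd j) as [[k Hk]|[k Hk]]; [left|right]; exists k; lia.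
Qed.

Lemma ee_pos a j : 0 < a -> 0 < ee a j.
Proof.
  intros Ha. destruct (parity j) as [[k ->]|[k ->]];
  [rewrite ee_even|rewrite ee_odd]; apply Rinv_0_lt_compat; pose proof (pos_INR k); lra.
Qed.

Lemma ee_dec a j : 0 < a < 1 -> ee a (S j) < ee a j.
Proof.
  intros Ha.
  destruct (parity j) as [[k ->]|[k ->]].
  - rewrite ee_odd, ee_even. pose proof (pos_INR k).
    apply Rinv_lt_contravar; nra.
  - replace (S (S (2*k))) with (2 * S k)%nat by lia.
    rewrite ee_odd, ee_even, S_INR. pose proof (pos_INR k).
    apply Rinv_lt_contravar; nra.
Qed.

Lemma ee_anti a i j : 0 < a < 1 -> (i <= j)%nat -> ee a j <= ee a i.
Proof.
  intros Ha H. induction H; [lra|]. pose proof (ee_dec a m Ha). lra.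
Qed.

Lemma ee_santi a i j : 0 < a < 1 -> (i < j)%nat -> ee a j < ee a i.
Proof.
  intros Ha H. pose proof (ee_anti a (S i) j Ha H). pose proof (ee_dec a i Ha). lra.
Qed.

Lemma ee_0 a : ee a 0 = 1.
Proof. unfold ee; simpl. replace (0+1+0) with 1 by ring. apply Rinv_1. Qed.

Lemma ee_1 a : ee a 1 = / (1 + a).
Proof. unfold ee; simpl. f_equal; ring. Qed.

Lemma flr_nat r (n : nat) : INR n <= r < INR n + 1 -> flr r = INR n.
Proof.
  intros H. unfold flr, Int_part.
  rewrite <- (tech_up r (Z.of_nat n + 1)).
  - rewrite minus_IZR, plus_IZR, <- INR_IZR_INZ. ring.
  - rewrite plus_IZR, <- INR_IZR_INZ. simpl; lra.
  - rewrite plus_IZR, <- INR_IZR_INZ. simpl; lra.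
Qed.

Lemma inv_lt1 c t : 0 < c -> 0 < t -> t < / c -> c < / t.
Proof.
  intros Hc Ht H. rewrite <- (Rinv_inv c). apply Rinv_lt_contravar; auto.
  apply Rmult_lt_0_compat; auto. apply Rinv_0_lt_compat; auto.
Qed.
Lemma inv_lt2 c t : 0 < c -> 0 < t -> / c < t -> / t < c.
Proof.
  intros Hc Ht H. rewrite <- (Rinv_inv c). apply Rinv_lt_contravar; auto.
  apply Rmult_lt_0_compat; auto. apply Rinv_0_lt_compat; auto.
Qed.
Lemma inv_le1 c t : 0 < c -> 0 < t -> t <= / c -> c <= / t.
Proof.
  intros Hc Ht H. rewrite <- (Rinv_inv c). apply Rinv_le_contravar; auto.
Qed.
Lemma inv_le2 c t : 0 < c -> 0 < t -> / c <= t -> / t <= c.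
Proof.
  intros Hc Ht H. rewrite <- (Rinv_inv c). apply Rinv_le_contravar; auto.
  apply Rinv_0_lt_compat; auto.
Qed.

Lemma cell_branch a j : 0 < a < 1 -> exists n b, forall t,
  ee a (S j) < t < ee a j -> T_alpha a t = gg n b t.
Proof.
  intros Ha. destruct (parity j) as [[k ->]|[k ->]].
  - exists (S k), true. intros t Ht. rewrite ee_odd, ee_even in Ht.
    pose proof (pos_INR k).
    assert (Ht0 : 0 < t) by (apply Rlt_trans with (2 := proj1 Ht); apply Rinv_0_lt_compat; lra).
    assert (H1 : INR k + 1 < / t) by (apply inv_lt1; lra).
    assert (H2 : / t < INR k + 1 + a) by (apply inv_lt2; lra).
    unfold T_alpha. destruct (excluded_middle_informative (D_alpha a t)) as [HD|HD].
    + rewrite (flr_nat _ (S k)); [unfold gg; auto|rewrite S_INR; lra].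
    + exfalso; apply HD. exists (S k). split; [lia|]. rewrite S_INR. lra.
  - exists (S k), false. intros t Ht.
    replace (S (S (2*k))) with (2 * S k)%nat in Ht by lia.
    rewrite ee_odd, ee_even, S_INR in Ht.
    pose proof (pos_INR k).
    assert (Ht0 : 0 < t) by (apply Rlt_trans with (2 := proj1 Ht); apply Rinv_0_lt_compat; lra).
    assert (H1 : INR k + 1 + a < / t) by (apply inv_lt1; lra).
    assert (H2 : / t < INR k + 1 + 1) by (apply inv_lt2; lra).
    unfold T_alpha. destruct (excluded_middle_informative (D_alpha a t)) as [HD|HD].
    + exfalso. destruct HD as [n [Hn [Hn1 Hn2]]].
      assert (0 < INR n) by (apply lt_0_INR; lia).
      assert (INR n <= / t) by (apply inv_le1; lra).
      assert (/ t <= INR n + a) by (apply inv_le2; lra).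
      assert (n < S (S k))%nat by (apply INR_lt; rewrite !S_INR; lra).
      assert (S k < n)%nat by (apply INR_lt; rewrite !S_INR; lra).
      lia.
    + rewrite (flr_nat _ (S k)); [unfold gg; auto|rewrite S_INR; lra].
Qed.

Lemma invariant a x : 0 < a < 1 -> I_alpha a x -> I_alpha a (T_alpha a x).
Proof.
  intros Ha Hx. unfold I_alpha in *.
  assert (Hm : 0 < Rmin a (1 - a)) by (apply Rmin_glb_lt; lra).
  assert (Hm2 : Rmin a (1 - a) <= a) by apply Rmin_l.
  assert (Hm3 : Rmin a (1 - a) <= 1 - a) by apply Rmin_r.
  assert (Hx0 : 0 < x) by lra.
  assert (Hix : 1 <= / x) by (rewrite <- Rinv_1; apply Rinv_le_contravar; lra).
  unfold T_alpha. destruct (excluded_middle_informative (D_alpha a x)) as [HD|HD].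
  - destruct HD as [n [Hn [Hn1 Hn2]]].
    assert (0 < INR n) by (apply lt_0_INR; lia).
    assert (INR n <= / x) by (apply inv_le1; lra).
    assert (/ x <= INR n + a) by (apply inv_le2; lra).
    rewrite (flr_nat _ n); lra.
  - destruct (base_Int_part (/ x)) as [B1 B2]. unfold flr.
    set (z := Int_part (/ x)) in *. clearbody z.
    assert (Hz : (0 < z)%Z) by (apply lt_0_IZR; lra).
    destruct (Rle_or_lt (/ x) (IZR z + a)) as [Hle|Hlt].
    + exfalso; apply HD. exists (Z.to_nat z).
      assert (E : INR (Z.to_nat z) = IZR z) by (rewrite INR_IZR_INZ, Znat.Z2Nat.id; [reflexivity|lia]).
      split; [apply (INR_le 1); rewrite E; simpl; apply (IZR_le 1); lia|]. rewrite E. split.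
      * rewrite <- (Rinv_inv x). apply Rinv_le_contravar; [apply Rinv_0_lt_compat; lra|lra].
      * rewrite <- (Rinv_inv x). apply Rinv_le_contravar; [apply (IZR_lt 0); lia|lra].
    + lra.
Qed.

Definition cell (a : R) (j : nat) : R * R :=
  (Rmax (Rmin a (1 - a)) (ee a (S j)), ee a j).

Definition PP (a : R) (K : nat) : list (R * R) :=
  filter (fun I => if Rlt_dec (Rmin a (1 - a)) (snd I) then true else false)
    (map (cell a) (seq 0 K)).

Lemma In_PP a K I : In I (PP a K) ->
  exists j, (j < K)%nat /\ I = cell a j /\ Rmin a (1 - a) < ee a j.
Proof.
  unfold PP. rewrite filter_In, in_map_iff. intros [[j [Hj Hin]] Ht].
  rewrite in_seq in Hin. subst I. exists j. split; [lia|split; auto].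
  simpl in Ht. destruct (Rlt_dec _ _); [auto|discriminate].
Qed.

Lemma PP_In a K j : (j < K)%nat -> Rmin a (1 - a) < ee a j -> In (cell a j) (PP a K).
Proof.
  intros Hj Hm. unfold PP. rewrite filter_In, in_map_iff. split.
  - exists j; split; auto. rewrite in_seq; lia.
  - simpl. destruct (Rlt_dec _ _); [auto|contradiction].
Qed.

Lemma PP_branch a K I : 0 < a < 1 -> In I (PP a K) ->
  exists n b, Rmin a (1 - a) <= fst I /\ fst I < snd I /\ snd I <= 1 /\
   forall t, oint I t -> T_alpha a t = gg n b t.
Proof.
  intros Ha HI. destruct (In_PP a K I HI) as [j [Hj [-> Hm]]].
  destruct (cell_branch a j Ha) as [n [b Hb]]. exists n, b. unfold cell, oint; simpl.
  split; [apply Rmax_l|]. split; [apply Rmax_lub_lt; auto; apply ee_dec; auto|].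
  split; [rewrite <- (ee_0 a); apply ee_anti; auto; lia|].
  intros t Ht. apply Hb. pose proof (Rmax_r (Rmin a (1 - a)) (ee a (S j))). lra.
Qed.

Lemma search a x k : 0 < a < 1 -> ee a k < x -> x <= ee a 0 ->
  exists j, (j < k)%nat /\ ee a (S j) < x <= ee a j.
Proof.
  intros Ha. induction k as [|k IH]; intros H1 H2; [lra|].
  destruct (Rlt_or_le (ee a k) x) as [H|H].
  - destruct (IH H H2) as [j [Hj Hj2]]. exists j; split; [lia|auto].
  - exists k; split; [lia|lra].
Qed.

Theorem lemma2p2 : forall alpha : R, 0 < alpha < 1 ->
  AFN_map (I_alpha alpha) (T_alpha alpha).
Proof.
  intros a Ha.
  set (m := Rmin a (1 - a)).
  assert (Hm : 0 < m) by (apply Rmin_glb_lt; lra).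
  assert (Hm2 : m <= a) by apply Rmin_l.
  assert (Hm3 : m <= 1 - a) by apply Rmin_r.
  split.
  { exists (I_alpha a :: nil). split.
    - intros S [<-|[]]. exists m, 1. unfold I_alpha. fold m. split; [lra|].
      split; intros x Hx; lra.
    - intros x; split.
      + intros Hx. exists (I_alpha a); simpl; auto.
      + intros [S [[<-|[]] HS]]; auto. }
  split.
  { intros x Hx. apply invariant; auto. }
  destruct (archimed_cor1 m Hm) as [N [HN HN0]].
  set (K := (2 * N)%nat).
  assert (HK : ee a K < m).
  { unfold K. rewrite ee_even. apply Rle_lt_trans with (2 := HN).
    assert (0 < INR N) by (apply lt_0_INR; lia).
    apply Rlt_le, Rinv_lt_contravar; nra. }
  exists (PP a K).
  assert (Hbr := fun I HI => PP_branch a K I Ha HI). fold m in Hbr.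
  assert (Hloc : forall I, In I (PP a K) -> exists b, forall x, oint I x ->
     0 < x <= 1 /\
     continuous (T_alpha a) x /\ ex_derive (T_alpha a) x /\ Derive (T_alpha a) x = d1 b x /\
     ex_derive (Derive (T_alpha a)) x /\ Derive (Derive (T_alpha a)) x = d2 b x).
  { intros I HI. destruct (Hbr I HI) as [n [b [H1 [H2 [H3 H4]]]]].
    exists b. intros x Hx. unfold oint in Hx. split; [lra|].
    apply (branch_local _ (fst I) (snd I) n b); auto; lra. }
  split.
  {
    split; [intros I HI; destruct (Hbr I HI) as [? [? [? [? ?]]]]; tauto|].
    split.
    { intros I HI x Hx. destruct (Hbr I HI) as [? [? [? [? ?]]]].
      unfold oint in Hx. unfold I_alpha. fold m. lra. }
    split.
    { unfold PP. apply NoDup_filter. apply NoDup_map_NoDup_ForallPairs.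
      - intros i j _ _ E. unfold cell in E. injection E as _ E.
        destruct (Nat.lt_trichotomy i j) as [H|[H|H]]; auto.
        + pose proof (ee_santi a i j Ha H); lra.
        + pose proof (ee_santi a j i Ha H); lra.
      - apply seq_NoDup. }
    split.
    { intros I J HI HJ HIJ x HxI HxJ.
      destruct (In_PP a K I HI) as [i [_ [-> _]]].
      destruct (In_PP a K J HJ) as [j [_ [-> _]]].
      unfold oint, cell in HxI, HxJ; simpl in HxI, HxJ.
      destruct (Nat.lt_trichotomy i j) as [H|[H|H]].
      + pose proof (ee_anti a (S i) j Ha H).
        pose proof (Rmax_r m (ee a (S i))). fold m in HxI. lra.
      + subst; auto.
      + pose proof (ee_anti a (S j) i Ha H).
        pose proof (Rmax_r m (ee a (S j))). fold m in HxJ. lra. }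
    exists (m :: map (ee a) (seq 0 (S K))).
    intros x Hx. unfold I_alpha in Hx; fold m in Hx.
    destruct (classic (In x (m :: map (ee a) (seq 0 (S K))))) as [Hin|Hin]; [right; auto|left].
    destruct (search a x K Ha) as [j [Hj Hj2]]; [lra|rewrite ee_0; lra|].
    assert (Hne : x <> ee a j).
    { intros E; apply Hin; right; rewrite in_map_iff. exists j; split; auto.
      rewrite in_seq; lia. }
    assert (Hxm : x <> m) by (intros E; apply Hin; left; auto).
    exists (cell a j). split.
    - apply PP_In; auto. fold m; lra.
    - unfold oint, cell; simpl. fold m. split; [apply Rmax_lub_lt; lra|lra]. }
  split.
  {
    intros I HI. destruct (Hbr I HI) as [n [b [H1 [H2 [H3 H4]]]]].
    destruct (Hloc I HI) as [b' Hb'].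
    split; [intros x Hx; apply Hb'; auto|].
    split.
    - destruct b; [left|right]; intros x y Hx Hy Hxy; rewrite !H4; auto;
        unfold gg, oint in *;
        assert (/ y < / x) by (apply Rinv_lt_contravar; nra); lra.
    - split; intros x Hx; apply Hb'; auto. }
  split.
  {
    exists 2. intros I HI x Hx. destruct (Hloc I HI) as [b Hb].
    destruct (Hb x Hx) as [Hx0 [_ [_ [E1 [_ E2]]]]]. rewrite E1, E2.
    assert (x <> 0) by lra.
    destruct b; unfold d1, d2; split.
    - apply Rinv_neq_0_compat, pow_nonzero; auto.
    - replace (- 2 / x ^ 3 / (/ x ^ 2) ^ 2) with (- 2 * x) by (field; auto).
      apply Rabs_le; lra.
    - apply Ropp_neq_0_compat, Rinv_neq_0_compat, pow_nonzero; auto.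
    - replace (2 / x ^ 3 / (- / x ^ 2) ^ 2) with (2 * x) by (field; auto).
      apply Rabs_le; lra. }
  split.
  {
    exists (map (fun I y => exists x, oint I x /\ T_alpha a x = y) (PP a K)).
    intros I HI. eexists; split; [apply in_map; exact HI|]. tauto. }
  assert (Hc0 : cell a 0 = (/ (1 + a), 1)).
  { unfold cell. rewrite ee_0, ee_1. f_equal. apply Rmax_right.
    fold m. assert (/ 2 < / (1 + a)) by (apply Rinv_lt_contravar; lra). lra. }
  assert (HZ : In (/ (1 + a), 1) (PP a K)).
  { rewrite <- Hc0. apply PP_In; [unfold K; lia|rewrite ee_0; fold m; lra]. }
  exists (((/ (1 + a), 1), 1) :: nil). split.
  { intros Z [<-|[]]. simpl. split; auto.
    destruct (Hbr _ HZ) as [n [b [H1 [H2 [H3 H4]]]]].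
    destruct (cell_branch a 0 Ha) as [n0 [b0 Hb0]].
    assert (Hg : forall t, oint (/ (1 + a), 1) t -> T_alpha a t = gg 1 true t).
    { intros t Ht. unfold oint in Ht; simpl in Ht.
      assert (D : D_alpha a t).
      { exists 1%nat. split; auto. simpl. rewrite Rinv_1. split; lra. }
      assert (Ht0 : 0 < t) by (pose proof (Rinv_0_lt_compat (1 + a)); lra).
      assert (INR 1 <= / t) by (simpl; rewrite <- Rinv_1; apply Rinv_le_contravar; lra).
      assert (/ t < 1 + a) by (apply inv_lt2; lra).
      unfold T_alpha. destruct (excluded_middle_informative (D_alpha a t)) as [_|HD];
        [|contradiction].
      rewrite (flr_nat _ 1); [unfold gg; auto|simpl in *; lra]. }
    assert (Hd : forall t, oint (/ (1 + a), 1) t -> Derive (T_alpha a) t = d1 true t).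
    { intros t Ht. pose proof Ht as Ht'. unfold oint in Ht'; simpl in Ht'.
      apply (branch_local _ (/ (1 + a)) 1 1 true); auto.
      apply Rinv_0_lt_compat; lra. }
    split; [simpl; auto|].
    split.
    { apply (filterlim_within_ext _ (gg 1 true)).
      { intros t Ht; symmetry; apply Hg; auto. }
      apply (filterlim_filter_le_1 _ (filter_le_within _)).
      assert (Hc : continuous (gg 1 true) 1).
      { apply (ex_derive_continuous (K:=R_AbsRing) (V:=R_NormedModule)).
        eexists; apply gg_d1; lra. }
      assert (E : gg 1 true 1 = 1) by (unfold gg; simpl; rewrite Rinv_1; ring).
      unfold continuous in Hc. rewrite E in Hc. exact Hc. }
    split.
    { apply (filterlim_within_ext _ (d1 true)).
      { intros t Ht; symmetry; apply Hd; auto. }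
      apply (filterlim_filter_le_1 _ (filter_le_within _)).
      assert (Hc : continuous (d1 true) 1).
      { apply (ex_derive_continuous (K:=R_AbsRing) (V:=R_NormedModule)).
        eexists; apply d1_d2; lra. }
      assert (E : d1 true 1 = 1) by (unfold d1; field).
      unfold continuous in Hc. rewrite E in Hc. exact Hc. }
    split.
    { intros x y Hx Hy Hxy Hy1. rewrite (Hd x Hx), (Hd y Hy). unfold d1, oint in *; simpl in *.
      assert (0 < x) by (pose proof (Rinv_0_lt_compat (1 + a)); lra).
      apply Rinv_le_contravar; nra. }
    { intros x y Hx Hy Hx1. unfold oint in Hx; simpl in Hx. lra. } }
  intros eps Heps.
  set (d := Rmin eps (/ 2)).
  assert (Hd1 : 0 < d) by (apply Rmin_glb_lt; lra).
  assert (Hd2 : d <= eps) by apply Rmin_l.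
  assert (Hd3 : d <= / 2) by apply Rmin_r.
  exists (/ (1 - d) ^ 2). split.
  { rewrite <- Rinv_1. apply Rinv_lt_contravar; nra. }
  intros I x HI Hx HZZ.
  destruct (Hloc I HI) as [b Hb]. destruct (Hb x Hx) as [Hx0 [_ [_ [E1 _]]]].
  assert (Hd' := HZZ _ (or_introl eq_refl)). simpl in Hd'.
  assert (x <= 1 - d).
  { destruct (Rle_or_lt x (1 - d)) as [?|Hc]; auto.
    assert (Rabs (x - 1) < eps) by (apply Rabs_def1; lra). lra. }
  rewrite E1. destruct b; unfold d1; [rewrite Rabs_right|rewrite Rabs_Ropp, Rabs_right].
  all: try (apply Rle_ge, Rlt_le, Rinv_0_lt_compat; nra).
  all: apply Rle_ge, Rinv_le_contravar; nra.
Qed.
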